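(* Let $G=\mathbb{Z}_2\times\mathbb{Z}_4$ and let $\theta_1,\theta_2$ be normalised orthomorphisms of $G$, with associated sets $A_{ij}$ (for $\theta_1$) and $A'_{ij}$ (for $\theta_2$). Write $\delta(g)=\theta_1(g)^{-1}\theta_2(g)$. Then $\theta_1\perp\theta_2$ if and only if (a) the sets $\delta(A_{44}\cap A'_{44})$, $\delta(A_{24}\cap A'_{24})$, $\delta(A_{42}\cap A'_{42})$, $\delta(A_{22}\cap A'_{22})$ are pairwise disjoint and their union is $\{g\in G: o(g)=2\}$, and (b) the sets $\delta(A_{44}\cap A'_{42})$, $\delta(A_{42}\cap A'_{44})$, $\delta(A_{24}\cap A'_{22})$, $\delta(A_{22}\cap A'_{24})$ are pairwise disjoint and their union is $\{g\in G: o(g)=4\}$.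
   Context: $G$ is written multiplicatively with identity $e$; $o(g)$ is the order of $g$. A normalised orthomorphism of $G$ is a bijection $\theta\colon G\to G$ with $\theta(e)=e$ such that $x\mapsto x^{-1}\theta(x)$ is a bijection of $G$. Two orthomorphisms are orthogonal, $\theta_1\perp\theta_2$, if $x\mapsto\theta_1(x)^{-1}\theta_2(x)$ is a bijection of $G$. For an orthomorphism $\theta$: $A_{44}=\{x: o(x)=4, o(\theta(x))=4\}$, $A_{42}=\{x: o(x)=4, o(\theta(x))=2\}$, $A_{24}=\{x: o(x)=2, o(\theta(x))=4\}$, $A_{22}=\{x: o(x)=2, o(\theta(x))=2\}$; $A_{ij}$ are these sets for $\theta_1$ and $A'_{ij}$ those for $\theta_2$. *)

(* Defs.v *)
From HB Require Import structures.
From mathcomp Require Import all_boot all_fingroup.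
From mathcomp Require Import ssralg zmodp.
From mathcomp Require Import gproduct.
Set Implicit Arguments. Unset Strict Implicit. Unset Printing Implicit Defensive.
Local Open Scope group_scope.

Notation G := ('Z_2 * 'Z_4)%type.

Section Ortho.
Variable gT : finGroupType.

Definition norm_orthomorphism (th : gT -> gT) : Prop :=
  [/\ bijective th, th 1 = 1 & bijective (fun x => (x^-1 * th x))].

Definition orthogonal (th1 th2 : gT -> gT) : Prop :=
  bijective (fun x => (th1 x)^-1 * th2 x).

Definition Aset (th : gT -> gT) (i j : nat) : {set gT} :=
  [set x | (#[x] == i) && (#[th x] == j)].

Definition delta (th1 th2 : gT -> gT) (g : gT) : gT := (th1 g)^-1 * th2 g.

Definition disjoint_union4 (S1 S2 S3 S4 T : {set gT}) : Prop :=
  [disjoint S1 & S2] /\ [disjoint S1 & S3] /\ [disjoint S1 & S4] /\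
  [disjoint S2 & S3] /\ [disjoint S2 & S4] /\ [disjoint S3 & S4] /\
      S1 :|: S2 :|: S3 :|: S4 = T.
End Ortho.

(* Main.v *)
Require Import Defs.
From HB Require Import structures.
From mathcomp Require Import all_boot all_fingroup.
From mathcomp Require Import ssralg zmodp.
From mathcomp Require Import gproduct cyclic.
Local Open Scope group_scope.

Lemma G_exp4 (x : G) : x ^+ 4 == 1.
Proof. by move: x => [[[|[|//]] ?] [[|[|[|[|//]]]] ?]]. Qed.

Lemma G_key (a b : G) : ((a^-1 * b) ^+ 2 == 1) = ((a ^+ 2 == 1) == (b ^+ 2 == 1)).
Proof.
by move: a b => [[[|[|//]] ?] [[|[|[|[|//]]]] ?]] [[[|[|//]] ?] [[|[|[|[|//]]]] ?]].
Qed.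

Lemma G_o4 (x : G) : (#[x] == 4) = (x ^+ 2 != 1).
Proof.
have h4 : #[x] %| 4 by rewrite order_dvdn G_exp4.
rewrite -order_dvdn.
have hp : 0 < #[x] := order_gt0 x.
have hl : #[x] <= 4 by apply: dvdn_leq.
move: h4 hp hl; case: #[x] => [|[|[|[|[|n]]]]] //.
Qed.

Lemma G_o2 (x : G) : (#[x] == 2) = (x != 1) && (x ^+ 2 == 1).
Proof.
have h4 : #[x] %| 4 by rewrite order_dvdn G_exp4.
rewrite -order_dvdn -order_eq1.
have hp : 0 < #[x] := order_gt0 x.
have hl : #[x] <= 4 by apply: dvdn_leq.
move: h4 hp hl; case: #[x] => [|[|[|[|[|n]]]]] //.
Qed.

Theorem lemma2 (th1 th2 : G -> G) :
  norm_orthomorphism th1 -> norm_orthomorphism th2 ->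
  let d := delta th1 th2 in
  let A := Aset th1 in
  let A' := Aset th2 in
  orthogonal th1 th2 <->
  disjoint_union4
      (d @: (A 4 4 :&: A' 4 4)) (d @: (A 2 4 :&: A' 2 4))
      (d @: (A 4 2 :&: A' 4 2)) (d @: (A 2 2 :&: A' 2 2))
      [set g : G | #[g] == 2]
  /\
  disjoint_union4
      (d @: (A 4 4 :&: A' 4 2)) (d @: (A 4 2 :&: A' 4 4))
      (d @: (A 2 4 :&: A' 2 2)) (d @: (A 2 2 :&: A' 2 4))
      [set g : G | #[g] == 4].
Proof.
move=> [bij1 e1 _] [bij2 e2 _] d A A'.
have F1 x : (th1 x == 1) = (x == 1).
  by rewrite -{1}e1 (inj_eq (bij_inj bij1)).
have F2 x : (th2 x == 1) = (x == 1).
  by rewrite -{1}e2 (inj_eq (bij_inj bij2)).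
have Fs x : (d x ^+ 2 == 1) = ((th1 x ^+ 2 == 1) == (th2 x ^+ 2 == 1)).
  by rewrite /d /delta G_key.
have d1 : d 1 = 1 by rewrite /d /delta e1 e2 mulg1 invg1.
split.
- move=> orth.
  have dinj : injective d := bij_inj orth.
  have Fd x : (d x == 1) = (x == 1) by rewrite -{1}d1 (inj_eq dinj).
  have dsj (P Q : {set G}) : [disjoint P & Q] -> [disjoint d @: P & d @: Q].
    by rewrite imset_disjoint.
  have dom (P Q : {set G}) : (forall x, x \in P -> x \in Q -> False) ->
      [disjoint P & Q].
    move=> H; rewrite -setI_eq0; apply/eqP/setP => x; rewrite !inE.
    by apply/negbTE/negP => /andP [] /H.
  have [dinv K1 K2] : bijective d := orth.
  have U (P : {set G}) (p : nat) :
      (forall x, (x \in P) = (x != 1) && (#[d x] == p)) ->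
      (forall g : G, #[g] == p -> g != 1) ->
      d @: P = [set g | #[g] == p].
    move=> HP Hp; apply/setP => g; rewrite inE; apply/imsetP/idP.
      by case=> x; rewrite HP => /andP [_ ?] ->.
    move=> Hg; exists (dinv g); last by rewrite K2.
    rewrite HP K2 Hg andbT; apply: contraNneq (Hp _ Hg) => E.
    by rewrite -(K2 g) E d1.
  split; (split; [|split; [|split; [|split; [|split; [|split]]]]]);
  rewrite ?dsj // ?dom // -?imsetU;
  try (apply: U; [move=> x; rewrite !inE ?G_o2 ?G_o4 ?Fs ?Fd ?F1 ?F2;
       have [->|xn1] := eqVneq x 1; [by rewrite ?e1 ?e2 ?expg1n ?eqxx |
       rewrite ?xn1 ?(negbTE xn1) /=;
       by case: (x ^+ 2 == 1) (th1 x ^+ 2 == 1) (th2 x ^+ 2 == 1) => [] [] []]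
     | by move=> g; apply: contraTneq => ->; rewrite order1]);
  move=> x; rewrite !inE ?G_o2 ?G_o4 ?F1 ?F2;
  have [->|xn1] := eqVneq x 1; rewrite ?e1 ?e2 ?expg1n ?eqxx ?xn1 ?(negbTE xn1) /=;
  by case: (x ^+ 2 == 1) (th1 x ^+ 2 == 1) (th2 x ^+ 2 == 1) => [] [] [].
- move=> [[_ [_ [_ [_ [_ [_ Ua]]]]]] [_ [_ [_ [_ [_ [_ Ub]]]]]]].
  have surj g : exists x, d x = g.
    case: (boolP (g == 1)) => [/eqP -> | gn1]; first by exists 1.
    case: (boolP (#[g] == 2)) => g2.
      have : g \in [set g : G | #[g] == 2] by rewrite inE.
      rewrite -Ua -!imsetU => /imsetP [x _ ->]; by exists x.
    have : g \in [set g : G | #[g] == 4].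
      by rewrite inE G_o4; move: g2; rewrite G_o2 gn1 /=.
    rewrite -Ub -!imsetU => /imsetP [x _ ->]; by exists x.
  have dT : d @: [set: G] = [set: G].
    apply/setP => g; rewrite inE; have [x <-] := surj g; exact: imset_f.
  apply: injF_bij => x y.
  have /imset_injP H : #|d @: [set: G]| == #|[set: G]| by rewrite dT.
  by apply: H; rewrite inE.
Qed.
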